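(* Let $\ell\ge1$, $m\ge0$, positive integers $n_0,\dots,n_m$ with $n:=\sum_j n_j-1$, distinct points $z_0=0,z_1,\dots,z_m$ in the open unit disc, and $\ell\times\ell$ matrices $W_{jk}$ be given, with $W$, $Z$, $e$, $S$ as below. Suppose $W$ satisfies the generalized Pick condition $W(S\otimes I_\ell)+(S\otimes I_\ell)W^*>0$. Let $T=(W-\tfrac12I)(W+\tfrac12I)^{-1}$ and, for $\lambda\in[0,1]$, $W(\lambda)=(I-\lambda T)^{-1}-\tfrac12 I$. Then for all $\lambda\in[0,1]$, $$W(\lambda)(S\otimes I_\ell)+(S\otimes I_\ell)W(\lambda)^*>0.$$
   Context: $W_j$ is the $\ell n_j\times\ell n_j$ block lower-triangular block-Toeplitz matrix with $W_{j0}$ on the block diagonal and $W_{jk}$ on the $k$-th block subdiagonal ($k=1,\dots,n_j-1$); $W=\operatorname{diag}(W_0,\dots,W_m)$. $Z_j$ is the $n_j\times n_j$ lower bidiagonal matrix with $z_j$ on the diagonal and $1$ on the subdiagonal; $Z=\operatorname{diag}(Z_0,\dots,Z_m)$. $e\in\mathbb{R}^{n+1}$ stacks the vectors $(1,0,\dots,0)'\in\mathbb{R}^{n_j}$, $j=0,\dots,m$. $S$ is the unique solution of the Lyapunov equation $S=ZSZ^*+ee'$. $\otimes$ is the Kronecker product, $^*$ conjugate transpose, and $>0$ means positive definite. *)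

(* Defs.v *)
(* Scalars: an arbitrary numClosedFieldType C (e.g. algC or
   complex R), which carries conjugation x^* and the partial order in which
   0 < x means "x is a positive real". *)
From mathcomp Require Import all_boot all_order all_algebra.
Set Implicit Arguments. Unset Strict Implicit. Unset Printing Implicit Defensive.
Import Order.TTheory GRing.Theory Num.Theory.
Local Open Scope ring_scope.

Section Defs.
Variable C : numClosedFieldType.

Definition ctmx (p q : nat) (A : 'M[C]_(p, q)) : 'M[C]_(q, p) :=
  (map_mx Num.conj A)^T.

Definition posdef (p : nat) (A : 'M[C]_p) : Prop :=
  ctmx A = A /\ forall v : 'cV[C]_p, v != 0 -> 0 < (ctmx v *m A *m v) 0 0.

(* total entry access at nat indices (0 out of range) *)
Definition getmx (p q : nat) (A : 'M[C]_(p, q)) (i j : nat) : C :=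
  match @insub nat (fun x => x < p)%N _ i, @insub nat (fun x => x < q)%N _ j with
  | Some i', Some j' => A i' j'
  | _, _ => 0
  end.

(* Kronecker product A (x) I_l, big index k <-> (k %/ l, k %% l) *)
Definition kron_id (p l : nat) (A : 'M[C]_p) : 'M[C]_(p * l) :=
  \matrix_(k, k') (if (k %% l == k' %% l)%N then getmx A (k %/ l)%N (k' %/ l)%N
                   else 0).

(* Block structure: sizes n_0,...,n_m; scalar index i < N := sum n_j
   lies in block blk i at offset off i within the block. *)
Definition sizes (m : nat) (nn : 'I_m.+1 -> nat) : seq nat :=
  [seq nn j | j <- enum 'I_m.+1].
Definition Ntot (m : nat) (nn : 'I_m.+1 -> nat) : nat := sumn (sizes nn).
Definition blk (m : nat) (nn : 'I_m.+1 -> nat) (i : nat) : 'I_m.+1 :=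
  inord (reshape_index (sizes nn) i).
Definition off (m : nat) (nn : 'I_m.+1 -> nat) (i : nat) : nat :=
  reshape_offset (sizes nn) i.

(* Z = diag(Z_0,...,Z_m), Z_j lower bidiagonal, z_j on diagonal, 1 below *)
Definition Zmx (m : nat) (nn : 'I_m.+1 -> nat) (z : 'I_m.+1 -> C)
  : 'M[C]_(Ntot nn) :=
  \matrix_(i, i')
    if blk nn i == blk nn i' then
      (if off nn i == off nn i' then z (blk nn i)
       else if off nn i == (off nn i').+1 then 1 else 0)
    else 0.

(* e stacks the vectors (1,0,...,0)' in R^{n_j} *)
Definition evec (m : nat) (nn : 'I_m.+1 -> nat) : 'cV[C]_(Ntot nn) :=
  \col_i (if off nn i == 0%N then 1 else 0).

(* W = diag(W_0,...,W_m), W_j block lower-triangular block-Toeplitz with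
   W_{j0} on the diagonal and W_{jk} on the k-th block subdiagonal.
   Big index k <-> (scalar index k %/ l, entry k %% l). *)
Definition Wmx (l m : nat) (nn : 'I_m.+1 -> nat)
  (Wjk : 'I_m.+1 -> nat -> 'M[C]_l) : 'M[C]_(Ntot nn * l) :=
  \matrix_(k, k')
    let i := (k %/ l)%N in let i' := (k' %/ l)%N in
    if (blk nn i == blk nn i') && (off nn i' <= off nn i)%N then
      getmx (Wjk (blk nn i) (off nn i - off nn i')%N) (k %% l)%N (k' %% l)%N
    else 0.

End Defs.

(* Main.v *)
Require Import Defs.
From mathcomp Require Import all_boot all_order all_algebra.
Set Implicit Arguments. Unset Strict Implicit. Unset Printing Implicit Defensive.
From mathcomp Require Import ring zify.
Import Order.TTheory GRing.Theory Num.Theory.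
Local Open Scope ring_scope.

Section Gen.
Variable C : numClosedFieldType.

Definition qf n (B : 'M[C]_n) (v : 'cV[C]_n) : C := (ctmx v *m B *m v) 0 0.

Lemma ctmxE p q (A : 'M[C]_(p, q)) i j : ctmx A i j = (A j i)^*.
Proof. by rewrite /ctmx !mxE. Qed.

Lemma ctmxK p q (A : 'M[C]_(p, q)) : ctmx (ctmx A) = A.
Proof. by apply/matrixP => i j; rewrite !ctmxE conjCK. Qed.

Lemma ctmxD p q (A B : 'M[C]_(p, q)) : ctmx (A + B) = ctmx A + ctmx B.
Proof. by apply/matrixP => i j; rewrite !ctmxE !mxE rmorphD. Qed.

Lemma ctmxN p q (A : 'M[C]_(p, q)) : ctmx (- A) = - ctmx A.
Proof. by apply/matrixP => i j; rewrite !ctmxE !mxE rmorphN. Qed.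

Lemma ctmxB p q (A B : 'M[C]_(p, q)) : ctmx (A - B) = ctmx A - ctmx B.
Proof. by rewrite ctmxD ctmxN. Qed.

Lemma ctmxZ p q a (A : 'M[C]_(p, q)) : ctmx (a *: A) = a^* *: ctmx A.
Proof. by apply/matrixP => i j; rewrite !ctmxE !mxE rmorphM. Qed.

Lemma ctmxM p q r (A : 'M[C]_(p, q)) (B : 'M[C]_(q, r)) :
  ctmx (A *m B) = ctmx B *m ctmx A.
Proof.
apply/matrixP => i j; rewrite ctmxE !mxE rmorph_sum; apply: eq_bigr => k _.
by rewrite !ctmxE rmorphM mulrC.
Qed.

Lemma ctmx_scalar n a : ctmx (a%:M : 'M[C]_n) = (a^*)%:M.
Proof.
apply/matrixP => i j; rewrite ctmxE !mxE eq_sym; case: eqP => _; by rewrite ?mulr1n ?mulr0n ?rmorph0. Qed.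

Lemma conj_half : (2^-1 : C)^* = 2^-1.
Proof. by rewrite fmorphV rmorphMn rmorph1. Qed.


Lemma ctmx0 p q : ctmx (0 : 'M[C]_(p, q)) = 0.
Proof. by apply/matrixP => i j; rewrite ctmxE !mxE rmorph0. Qed.

Lemma qf_ct n (M B : 'M[C]_n) v : qf (M *m B *m ctmx M) v = qf B (ctmx M *m v).
Proof. by rewrite /qf ctmxM ctmxK !mulmxA. Qed.

Lemma qfD n (A B : 'M[C]_n) v : qf (A + B) v = qf A v + qf B v.
Proof. by rewrite /qf mulmxDr mulmxDl mxE. Qed.

Lemma qfN n (A : 'M[C]_n) v : qf (- A) v = - qf A v.
Proof. by rewrite /qf mulmxN mulNmx mxE. Qed.

Lemma qfZ n a (A : 'M[C]_n) v : qf (a *: A) v = a * qf A v.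
Proof. by rewrite /qf -scalemxAr -scalemxAl mxE. Qed.

Lemma posdef_congr n (M B : 'M[C]_n) :
  M \in unitmx -> posdef B -> posdef (M *m B *m ctmx M).
Proof.
move=> uM [hB pB]; split.
  by rewrite !ctmxM ctmxK hB mulmxA.
move=> v v0; change (0 < qf (M *m B *m ctmx M) v); rewrite qf_ct; apply: pB.
apply: contra v0 => /eqP H.
have : ctmx v *m M = 0 by rewrite -[ctmx v *m M]ctmxK ctmxM ctmxK H ctmx0.
move=> H2; have : ctmx v = 0.
  by rewrite -[ctmx v](mulmxK uM) H2 mul0mx.
by move=> H3; rewrite -[v]ctmxK H3 ctmx0.
Qed.

Lemma nonunit_row n (P : 'M[C]_n) :
  P \notin unitmx -> exists2 r : 'rV_n, r != 0 & r *m P = 0.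
Proof.
rewrite -row_free_unit -kermx_eq0 => HK.
have /existsP [i Hi] : [exists i, row i (kermx P) != 0].
  apply: contraR HK => /existsPn H; apply/eqP/row_matrixP => i.
  by rewrite row0; apply/eqP/negPn/H.
by exists (row i (kermx P)) => //; rewrite -row_mul mulmx_ker row0.
Qed.

Lemma cayley_id n (A X : 'M[C]_n) :
  let h := (2^-1 : C)%:M in let P := X + h in
  P \in unitmx -> let U := invmx P *m (X - h) in
  P *m (A - U *m A *m ctmx U) *m ctmx P = X *m A + A *m ctmx X.
Proof.
move=> h P uP U.
rewrite mulmxBr mulmxBl.
have -> : P *m (U *m A *m ctmx U) *m ctmx P = (P *m U) *m A *m (ctmx U *m ctmx P).
  by rewrite !mulmxA.
rewrite -ctmxM /U mulKVmx // /P ctmxB ctmxD /h ctmx_scalar conj_half.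
rewrite !(mulmxDl, mulmxDr, mulmxBl, mulmxBr) !(mulmxN, mulNmx) !(mul_scalar_mx, mul_mx_scalar) -!scalemxAl opprK.
apply/matrixP => i j; rewrite !mxE.
by field.
Qed.


Lemma mulmxVC n (P : 'M[C]_n) : P \in unitmx -> P *m invmx P = 1%:M.
Proof. exact: mulmxV. Qed.

Lemma ctmx1 n : ctmx (1%:M : 'M[C]_n) = 1%:M.
Proof. by rewrite ctmx_scalar rmorph1. Qed.

Lemma congr_cancel n (P D : 'M[C]_n) : P \in unitmx ->
  invmx P *m (P *m D *m ctmx P) *m ctmx (invmx P) = D.
Proof.
move=> uP; rewrite !mulmxA mulVmx // mul1mx -mulmxA -ctmxM mulVmx //.
by rewrite ctmx1 mulmx1.
Qed.

Lemma main_generic n (A X : 'M[C]_n) (lambda : C) :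
  posdef A -> posdef (X *m A + A *m ctmx X) -> 0 <= lambda <= 1 ->
  let T := (X - 2^-1%:M) *m invmx (X + 2^-1%:M) in
  let Xl := invmx (1%:M - lambda *: T) - 2^-1%:M in
  posdef (Xl *m A + A *m ctmx Xl).
Proof.
move=> [hA pA] pXA /andP[l0 l1] T Xl.
set h := (2^-1 : C)%:M : 'M_n.
have hE : T = (X - h) *m invmx (X + h) by [].
have hXl : Xl = invmx (1%:M - lambda *: T) - h by [].
have uP : X + h \in unitmx.
  apply/negPn/negP => /nonunit_row [r r0 rP].
  have rX : r *m X = - (2^-1 *: r).
    apply/eqP; rewrite -subr_eq0 opprK -mul_mx_scalar -mulmxDr.
    by apply/eqP.
  have v0 : ctmx r != 0.
    by apply: contra r0 => /eqP H; rewrite -[r]ctmxK H ctmx0.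
  have := pXA.2 _ v0; have := pA _ v0.
  rewrite ctmxK mulmxDr mulmxDl !mulmxA rX -(mulmxA (r *m A)) -ctmxM rX.
  rewrite ctmxN ctmxZ conj_half !mulNmx !mulmxN -!scalemxAl -!scalemxAr.
  set M := r *m A *m ctmx r.
  rewrite !mxE.
  have half2 : (2^-1 : C) + 2^-1 = 1 by field.
  move=> x0; rewrite -opprD -mulrDl half2.
  by rewrite mul1r oppr_gt0 => H; have := lt_trans H x0; rewrite ltxx.
have Xh : X - h = (X + h) - 1%:M.
  apply/matrixP => i j; rewrite !mxE; case: eqP => _; rewrite ?mulr1n ?mulr0n.
    by field.
  by rewrite !subr0 addr0.
have TU : invmx (X + h) *m (X - h) = T.
  rewrite hE Xh mulmxBr mulmxBl.
  rewrite mulmx1 mul1mx mulVmx //; congr (_ - _); symmetry; exact: (mulmxV uP).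
have pD : posdef (A - T *m A *m ctmx T).
  have E := cayley_id A uP.
  rewrite /= -/h TU in E.
  have -> : A - T *m A *m ctmx T = invmx (X + h) *m (X *m A + A *m ctmx X) *m ctmx (invmx (X + h)).
    by rewrite -E congr_cancel.
  by apply: posdef_congr; rewrite ?unitmx_inv.
have cl : lambda^* = lambda by rewrite geC0_conj.
set Tl := lambda *: T.
have pDl : posdef (A - Tl *m A *m ctmx Tl).
  split.
    by rewrite ctmxB !ctmxM ctmxK hA mulmxA.
  move=> v v0; change (0 < qf (A - Tl *m A *m ctmx Tl) v).
  have := pD.2 _ v0; have := pA _ v0.
  change (0 < qf A v -> 0 < qf (A - T *m A *m ctmx T) v -> 0 < qf (A - Tl *m A *m ctmx Tl) v).
  rewrite /Tl ctmxZ cl -scalemxAl -scalemxAr -scalemxAl scalerA !qfD !qfN qfZ.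
  set a := qf A v; set y := qf _ v => a0 d0.
  have -> : a - lambda * lambda * y = (1 - lambda ^+ 2) * a + lambda ^+ 2 * (a - y).
    by ring.
  have [->|lp] := eqVneq lambda 0.
    by rewrite expr0n /= subr0 mul1r mul0r addr0.
  apply: ltr_wpDl.
    by apply: mulr_ge0; [rewrite subr_ge0 exprn_ile1 | exact: ltW].
  by apply: mulr_gt0 => //; rewrite exprn_gt0 // lt_def lp l0.
have uL : 1%:M - Tl \in unitmx.
  apply/negPn/negP => /nonunit_row [r r0 rL].
  have rT : r *m Tl = r.
    by apply/eqP; rewrite eq_sym -subr_eq0 -[r in r - _]mulmx1 -mulmxBr rL.
  have v0 : ctmx r != 0.
    by apply: contra r0 => /eqP H; rewrite -[r]ctmxK H ctmx0.
  have := pDl.2 _ v0.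
  rewrite ctmxK mulmxBr mulmxBl !mulmxA rT -(mulmxA (r *m A)) -ctmxM rT subrr mxE.
  by rewrite ltxx.
have PL : Xl + h = invmx (1%:M - Tl) by rewrite hXl subrK.
have uPL : Xl + h \in unitmx by rewrite PL unitmx_inv.
have E := cayley_id A uPL.
rewrite /= -/h in E.
have UL : invmx (Xl + h) *m (Xl - h) = Tl.
  have -> : Xl - h = invmx (1%:M - Tl) - 1%:M.
    rewrite hXl -addrA; congr (_ + _).
    apply/matrixP => i j; rewrite !mxE; case: eqP => _; rewrite ?mulr1n ?mulr0n.
      by field.
    by rewrite oppr0 addr0.
  rewrite PL invmxK mulmxBr mulmxVC // mulmx1.
  by rewrite opprB addrC subrK.
rewrite UL in E; rewrite -E.
by apply: posdef_congr.
Qed.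

End Gen.

Section Inertia.
Variable C : numClosedFieldType.

Lemma mxBE p q (A B : 'M[C]_(p, q)) i j : (A - B) i j = A i j - B i j.
Proof. by rewrite !mxE. Qed.
Lemma mxDE p q (A B : 'M[C]_(p, q)) i j : (A + B) i j = A i j + B i j.
Proof. by rewrite !mxE. Qed.
Lemma mxZE p q c (A : 'M[C]_(p, q)) i j : (c *: A) i j = c * A i j.
Proof. by rewrite !mxE. Qed.

Definition bf n (B : 'M[C]_n) (u v : 'cV[C]_n) : C := (ctmx u *m B *m v) 0 0.

Lemma bf_sum n (B : 'M[C]_n) u v : bf B u v = \sum_i (u i 0)^* * (B *m v) i 0.
Proof. rewrite /bf -mulmxA mxE; apply: eq_bigr => i _; by rewrite ctmxE. Qed.

Lemma bfDl n (B : 'M[C]_n) u w v : bf B (u + w) v = bf B u v + bf B w v.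
Proof. by rewrite /bf ctmxD !mulmxDl mxE. Qed.
Lemma bfDr n (B : 'M[C]_n) u w v : bf B v (u + w) = bf B v u + bf B v w.
Proof. by rewrite /bf mulmxDr mxE. Qed.
Lemma bfZl n (B : 'M[C]_n) c u v : bf B (c *: u) v = c^* * bf B u v.
Proof. by rewrite /bf ctmxZ -!scalemxAl mxE. Qed.
Lemma bfZr n (B : 'M[C]_n) c u v : bf B u (c *: v) = c * bf B u v.
Proof. by rewrite /bf -scalemxAr mxE. Qed.
Lemma bf_conj n (B : 'M[C]_n) u v : ctmx B = B -> bf B u v = (bf B v u)^*.
Proof.
move=> hB; rewrite /bf -ctmxE !ctmxM ctmxK hB mulmxA.
by [].
Qed.
Lemma bf0r n (B : 'M[C]_n) u : bf B u 0 = 0.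
Proof. by rewrite /bf mulmx0 mxE. Qed.

Lemma qf_bf n (B : 'M[C]_n) v : qf B v = bf B v v.
Proof. by []. Qed.

Lemma qf_ct' n (M B : 'M[C]_n) v : qf (ctmx M *m B *m M) v = qf B (M *m v).
Proof. by rewrite /qf ctmxM !mulmxA. Qed.

Lemma qf_rank1 n (e v : 'cV[C]_n) :
  qf (e *m ctmx e) v = ((ctmx e *m v) 0 0)^* * (ctmx e *m v) 0 0.
Proof.
rewrite /qf -!mulmxA mulmxA mxE big_ord1; congr (_ * _).
have -> : ctmx v *m e = ctmx (ctmx e *m v) by rewrite ctmxM ctmxK.
by rewrite ctmxE.
Qed.

Definition sup n k (v : 'cV[C]_n) := forall i : 'I_n, (k <= i)%N -> v i 0 = 0.

Lemma inertia n (Y X : 'M[C]_n) (e : 'cV[C]_n) :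
  ctmx X = X ->
  (forall i j : 'I_n, (j < i)%N -> Y i j = 0) ->
  (forall i, `|Y i i| < 1) ->
  X = ctmx Y *m X *m Y + e *m ctmx e ->
  (forall (k : 'I_n) (w : 'cV_n), w k 0 = 1 -> Y *m w = Y k k *: w ->
      (ctmx e *m w) 0 0 != 0) ->
  posdef X.
Proof.
move=> hX Ytri Ydiag HX Heig.
have qf0 : forall b, qf X b = bf X b b by [].
suff H : forall k, (k <= n)%N ->
  (forall v, sup k v -> v != 0 -> 0 < qf X v) /\
  (forall u : 'cV_n, exists a, sup k a /\
     forall i : 'I_n, (i < k)%N -> (X *m a) i 0 = u i 0).
  split => // v v0; have [Hp _] := H n (leqnn n).
  by apply: Hp => // i; rewrite leqNgt ltn_ord.
elim => [|k IH] kn.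
  split.
    move=> v sv; case/negP; apply/eqP/matrixP => i j.
    by rewrite (ord1 j) mxE; apply: sv.
  by move=> u; exists 0; split => // i; rewrite mxE.
have [pos solv] := IH (ltnW kn).
have nneg : forall b, sup k b -> 0 <= qf X b.
  move=> b sb; have [->|b0] := eqVneq b 0.
    by rewrite /qf mulmx0 mxE.
  exact/ltW/pos.
pose kk : 'I_n := Ordinal kn.
pose ek : 'cV[C]_n := delta_mx kk 0.
have [a [sa Ha]] := solv (X *m ek).
pose w := ek - a.
have wk : w kk 0 = 1.
  by rewrite /w !mxE eqxx sa //= subr0.
have wsup : forall i : 'I_n, (k < i)%N -> w i 0 = 0.
  move=> i ki; rewrite /w !mxE sa ?(ltnW ki) //.
  have -> : (i == kk) = false by apply/negbTE; apply: contraTneq ki => ->; rewrite ltnn.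
  by rewrite subr0.
have Xw0 : forall i : 'I_n, (i < k)%N -> (X *m w) i 0 = 0.
  by move=> i ik; rewrite /w mulmxBr mxBE Ha // subrr.
clearbody w.
have orth : forall b, sup k b -> bf X b w = 0.
  move=> b sb; rewrite bf_sum; apply: big1 => i _.
  by case: (ltnP i k) => ik; [rewrite Xw0 // mulr0 | rewrite sb // rmorph0 mul0r].
have orth' : forall b, sup k b -> bf X w b = 0.
  by move=> b sb; rewrite bf_conj // orth // rmorph0.
have qXwE : qf X w = (X *m w) kk 0.
  rewrite qf0 bf_sum (bigD1 kk) //= wk rmorph1 mul1r big1 ?addr0 // => i ik.
  case: (ltngtP i k) => [ik'|ki|ik'].
  - by rewrite Xw0 // mulr0.
  - by rewrite wsup // rmorph0 mul0r.
  - by case/eqP: ik; apply: val_inj.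
pose mu := Y kk kk.
pose y := Y *m w - mu *: w.
have Ywk : (Y *m w) kk 0 = mu.
  rewrite mxE (bigD1 kk) //= wk mulr1 big1 ?addr0 // => j jk.
  case: (ltngtP j k) => [jk'|kj|jk'].
  - by rewrite Ytri // mul0r.
  - by rewrite wsup // mulr0.
  - by case/eqP: jk; apply: val_inj.
have Ywi : forall i : 'I_n, (k < i)%N -> (Y *m w) i 0 = 0.
  move=> i ki; rewrite mxE; apply: big1 => j _.
  case: (ltnP j i) => ji; first by rewrite Ytri // mul0r.
  by rewrite wsup ?mulr0 // (leq_trans ki ji).
have sy : sup k y.
  move=> i ki; rewrite /y mxBE mxZE.
  case: (ltnP k i) => [ki'|ik].
    by rewrite Ywi // wsup // mulr0 subrr.
  have -> : i = kk by apply: val_inj; apply/eqP; rewrite eqn_leq ik ki.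
  by rewrite Ywk wk mulr1 subrr.
have Yy : Y *m w = mu *: w + y by rewrite /y addrC subrK.
clearbody y.
pose s := (ctmx e *m w) 0 0.
have Ew : (1 - mu^* * mu) * qf X w = qf X y + s^* * s.
  have E1 : qf X w = qf X (Y *m w) + s^* * s.
    by rewrite {1}HX qfD qf_ct' qf_rank1.
  rewrite Yy !qf0 in E1; rewrite !qf0.
  rewrite bfDl !bfDr !bfZl !bfZr (orth _ sy) (orth' _ sy) !mulr0 add0r addr0 in E1.
  rewrite mulrBl mul1r {1}E1 mulrA.
  ring.
have d0 : 0 < 1 - mu^* * mu.
  by rewrite subr_gt0 mulrC -normCK expr_lt1 // Ydiag.
have qw : 0 < qf X w.
  have R0 : 0 < qf X y + s^* * s.
    have [y0|ny0] := eqVneq y 0.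
      have : s != 0.
        by apply: Heig wk _; rewrite Yy y0 addr0.
      rewrite y0 /qf mulmx0 mxE add0r -mul_conjC_gt0 mulrC.
      by [].
    apply: ltr_wpDr; first by rewrite mulrC mul_conjC_ge0.
    exact: pos.
  have -> : qf X w = (qf X y + s^* * s) / (1 - mu^* * mu).
    by rewrite -Ew mulrAC divff ?mul1r // gt_eqF.
  exact: divr_gt0.
have Xwk : (X *m w) kk 0 != 0 by rewrite -qXwE gt_eqF.
split.
  move=> v sv v0.
  pose c := v kk 0.
  pose a' := v - c *: w.
  have sa' : sup k a'.
    move=> i ki; rewrite /a' mxBE mxZE.
    case: (ltnP k i) => [ki'|ik].
      by rewrite sv // wsup // mulr0 subrr.
    have -> : i = kk by apply: val_inj; apply/eqP; rewrite eqn_leq ik ki.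
    by rewrite wk mulr1 subrr.
  have va : v = a' + c *: w by rewrite /a' subrK.
  have a'0 : c = 0 -> a' = v by move=> c0; rewrite /a' c0 scale0r subr0.
  clearbody a'; rewrite va.
  rewrite qf0 bfDl !bfDr !bfZl !bfZr orth // orth' // !mulr0 addr0 add0r.
  rewrite -!qf0.
  have [c0|c0] := eqVneq c 0.
    by rewrite c0 rmorph0 !mul0r addr0; apply: pos => //; rewrite a'0.
  apply: ltr_wpDl; first exact: nneg.
  by rewrite mulrA; apply: mulr_gt0 => //; rewrite mulrC mul_conjC_gt0.
move=> u; have [a0 [sa0 Ha0]] := solv u.
pose d := (u kk 0 - (X *m a0) kk 0) / (X *m w) kk 0.
exists (a0 + d *: w); split.
  move=> i ki; rewrite mxDE mxZE sa0 ?(ltnW ki) // wsup // mulr0 addr0 //.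
move=> i ik; rewrite mulmxDr -scalemxAr mxDE mxZE.
case: (ltnP i k) => [ik'|ki].
  by rewrite Ha0 // Xw0 // mulr0 addr0.
have -> : i = kk by apply: val_inj; apply/eqP; rewrite eqn_leq ki -ltnS ik.
by rewrite /d divfK // addrC subrK.
Qed.

End Inertia.

Section Uniq.
Variable C : numClosedFieldType.

Lemma stein_uniq n (Z D : 'M[C]_n) :
  (forall i j : 'I_n, (i < j)%N -> Z i j = 0) ->
  (forall i j : 'I_n, Z i i * (Z j j)^* != 1) ->
  D = Z *m D *m ctmx Z -> D = 0.
Proof.
move=> Ztri Zd HD.
suff H : forall s (i j : 'I_n), (i + j < s)%N -> D i j = 0.
  by apply/matrixP => i j; rewrite mxE; apply: (H (i + j).+1).
elim => [//|s IH] i j ijs.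
have ZD : forall b : 'I_n, (b < j)%N -> (Z *m D) i b = 0.
  move=> b bj; rewrite mxE; apply: big1 => a _.
  case: (ltnP i a) => ia; first by rewrite Ztri // mul0r.
  rewrite IH ?mulr0 //; lia.
have E : D i j = Z i i * D i j * (Z j j)^*.
  rewrite {1}HD mxE (bigD1 j) //= ctmxE big1 ?addr0.
    congr (_ * _); rewrite mxE (bigD1 i) //= big1 ?addr0 // => a ai.
    case: (ltnP i a) => ia; first by rewrite Ztri // mul0r.
    have ai' : (a < i)%N by rewrite ltn_neqAle ia andbT; apply: contra ai => /eqP H; apply/eqP/val_inj.
    rewrite IH ?mulr0 //; lia.
  move=> b bj; rewrite ctmxE.
  case: (ltnP j b) => jb; first by rewrite Ztri // rmorph0 mulr0.
  have bj' : (b < j)%N by rewrite ltn_neqAle jb andbT; apply: contra bj => /eqP H; apply/eqP/val_inj.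
  by rewrite ZD // mul0r.
have : D i j * (1 - Z i i * (Z j j)^*) = 0.
  by rewrite mulrBr mulr1 {1}E; ring.
move/eqP; rewrite mulf_eq0 subr_eq0 [1 == _]eq_sym (negbTE (Zd i j)) orbF.
by move/eqP.
Qed.

End Uniq.

Section Blocks.
Variable C : numClosedFieldType.
Variables (m : nat) (nn : 'I_m.+1 -> nat).

Local Notation N := (Ntot nn).
Local Notation sh := (sizes nn).

Lemma size_sizes : size sh = m.+1.
Proof. by rewrite /sizes size_map size_enum_ord. Qed.

Lemma blk_val (i : nat) : (i < N)%N -> (blk nn i : nat) = reshape_index sh i.
Proof. by move=> iN; rewrite /blk inordK // -size_sizes reshape_indexP. Qed.

Lemma flat (i : nat) : i = (sumn (take (reshape_index sh i) sh) + off nn i)%N.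
Proof. by rewrite /off -[X in X = _](reshape_indexK sh i). Qed.

Lemma same_blk (i i' : 'I_N) : blk nn i = blk nn i' ->
  (i + off nn i' = i' + off nn i)%N.
Proof.
move=> H; have := congr1 (@nat_of_ord _) H; rewrite !blk_val // => Hr.
rewrite {1}(flat i) {2}(flat i') Hr; lia.
Qed.

Lemma Zmx_E (z : 'I_m.+1 -> C) (i i' : 'I_N) :
  Zmx nn z i i' = if i == i' then z (blk nn i)
    else if (i == i'.+1 :> nat) && (blk nn i == blk nn i') then 1 else 0.
Proof.
rewrite /Zmx mxE.
have [Hb|Hb] := eqVneq (blk nn i) (blk nn i').
  have Hs := same_blk Hb; rewrite andbT.
  have [<-|ne] := eqVneq i i'; first by rewrite eqxx.
  have -> : (off nn i == off nn i') = false.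
    apply/negbTE; apply: contra ne => /eqP H; apply/eqP/ord_inj; lia.
  have -> : (off nn i == (off nn i').+1) = (i == i'.+1 :> nat).
    apply/eqP/eqP; lia.
  by [].
have -> : (i == i') = false by apply/negbTE; apply: contra Hb => /eqP ->.
by rewrite andbF.
Qed.

Lemma pred_blk (i : 'I_N) : (0 < off nn i)%N ->
  exists i' : 'I_N, (i'.+1 = i :> nat) /\ blk nn i' = blk nn i.
Proof.
move=> o0.
have Hi := flat i.
have ri := reshape_offsetP (ltn_ord i : (i < sumn sh)%N).
have i0 : (0 < i)%N by lia.
have ilt : (i.-1 < N)%N by rewrite (leq_ltn_trans (leq_pred i)).
exists (Ordinal ilt); split; first by rewrite /= prednK.
apply: ord_inj; rewrite !blk_val //=.
have -> : i.-1 = flatten_index sh (reshape_index sh i) (off nn i).-1.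
  rewrite /flatten_index; lia.
rewrite flatten_indexKl //.
rewrite /off in o0 *; lia.
Qed.

End Blocks.

Section SPos.
Variable C : numClosedFieldType.
Variables (m : nat) (nn : 'I_m.+1 -> nat) (z : 'I_m.+1 -> C).

Local Notation N := (Ntot nn).
Local Notation Z := (Zmx nn z).
Local Notation e := (evec C nn).

Lemma eig_e (zinj : injective z) (k : 'I_N) (w : 'cV[C]_N) :
  w k 0 = 1 -> ctmx Z *m w = ctmx Z k k *: w -> (ctmx e *m w) 0 0 != 0.
Proof.
move=> wk Hw.
have Hwi : forall i, (ctmx Z *m w) i 0 = (z (blk nn k))^* * w i 0.
  by move=> i; rewrite Hw mxE ctmxE Zmx_E eqxx.
have S1 : forall t (i : 'I_N), (N - i <= t)%N -> blk nn i != blk nn k -> w i 0 = 0.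
  elim => [|t IH] i it bik.
    by move: it; rewrite leqn0 subn_eq0 leqNgt ltn_ord.
  have := Hwi i.
  rewrite mxE (bigD1 i) //= ctmxE Zmx_E eqxx big1 ?addr0; last first.
    move=> j ji; rewrite ctmxE Zmx_E (negbTE ji).
    case: ifP => [/andP[/eqP ji1 /eqP bji]|_]; last by rewrite rmorph0 mul0r.
    rewrite IH ?mulr0 //; first by lia.
    by rewrite bji.
  move/eqP; rewrite -subr_eq0 -mulrBl mulf_eq0 subr_eq0 => /orP[|/eqP //].
  move/eqP/(congr1 Num.conj); rewrite !conjCK => /zinj H.
  by rewrite H eqxx in bik.
have S2 : off nn k = 0%N.
  apply/eqP; rewrite -leqn0 leqNgt; apply/negP => /pred_blk [i' [ik bik]].
  have := Hwi i'.
  rewrite mxE (bigD1 i') //= (bigD1 k) /=; last by apply/eqP => H; move: ik; rewrite H; lia.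
  rewrite big1 ?addr0; last first.
    move=> j /andP[ji jk]; rewrite ctmxE Zmx_E (negbTE ji).
    case: ifP => [/andP[/eqP ji1 _]|_]; last by rewrite rmorph0 mul0r.
    by case/eqP: jk; apply: ord_inj; rewrite ji1 ik.
  rewrite !ctmxE !Zmx_E eqxx bik.
  have -> : (k == i') = false by apply/negbTE/eqP => H; move: ik; rewrite H; lia.
  rewrite ik eqxx eqxx /= rmorph1 mul1r wk => /eqP.
  by rewrite -subr_eq0 addrAC subrr add0r oner_eq0.
rewrite mxE (bigD1 k) //= ctmxE mxE S2 eqxx rmorph1 mul1r wk big1 ?addr0.
  exact: oner_neq0.
move=> s sk; rewrite ctmxE mxE.
case: eqP => [s0|_]; last by rewrite rmorph0 mul0r.
have [bsk|bsk] := eqVneq (blk nn s) (blk nn k).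
  have := same_blk bsk; rewrite s0 S2 => H.
  by case/eqP: sk; apply: ord_inj; lia.
by rewrite (S1 N) ?mulr0 // leq_subr.
Qed.


Lemma S_posdef (S : 'M[C]_N) : injective z -> (forall j, `|z j| < 1) ->
  S = Z *m S *m ctmx Z + e *m e^T -> posdef S.
Proof.
move=> zinj zlt HS.
have ce : ctmx e = e^T.
  apply/matrixP => i j; rewrite ctmxE !mxE.
  by case: eqP; rewrite ?rmorph1 ?rmorph0.
have cee : ctmx (e *m e^T) = e *m e^T by rewrite -ce ctmxM ctmxK.
have Ztri : forall i j : 'I_N, (i < j)%N -> Z i j = 0.
  move=> i j ij; rewrite Zmx_E.
  have -> : (i == j) = false by apply/negbTE; rewrite neq_ltn ij.
  have -> : (i == j.+1 :> nat) = false by apply/negbTE; lia.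
  by [].
have Zd : forall i j : 'I_N, Z i i * (Z j j)^* != 1.
  move=> i j; rewrite !Zmx_E !eqxx; apply/eqP => H.
  have := congr1 (fun x => `|x|) H; rewrite /= normrM norm_conjC normr1 => H'.
  have : `|z (blk nn i)| * `|z (blk nn j)| < 1 by apply: mulr_ilt1.
  by rewrite H' ltxx.
have hS : ctmx S = S.
  apply/eqP; rewrite eq_sym -subr_eq0; apply/eqP.
  apply: (stein_uniq Ztri Zd).
  have cS : ctmx S = Z *m ctmx S *m ctmx Z + e *m e^T.
    by rewrite {1}HS ctmxD cee !ctmxM ctmxK mulmxA.
  rewrite {1}cS {1}HS mulmxBr mulmxBl.
  by rewrite opprD addrACA subrr addr0.
apply: (@inertia _ _ (ctmx Z) S e) => //.
- by move=> i j ji; rewrite ctmxE Ztri // rmorph0.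
- by move=> i; rewrite ctmxE Zmx_E eqxx norm_conjC.
- by rewrite ctmxK ce.
- exact: eig_e.
Qed.

End SPos.

Section Kron.
Variable C : numClosedFieldType.
Variables (p l : nat) (l0 : (0 < l)%N).

Lemma getmx_ord q r (A : 'M[C]_(q, r)) (i : 'I_q) (j : 'I_r) : getmx A i j = A i j.
Proof.
rewrite /getmx; case: insubP => [i' _ Hi|]; last by rewrite ltn_ord.
case: insubP => [j' _ Hj|]; last by rewrite ltn_ord.
by congr (A _ _); apply: val_inj.
Qed.

Lemma divo_lt (k : 'I_(p * l)) : (k %/ l < p)%N.
Proof. by rewrite ltn_divLR. Qed.

Definition divo (k : 'I_(p * l)) : 'I_p := Ordinal (divo_lt k).

Lemma divoE k : (divo k : nat) = (k %/ l)%N.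
Proof. by []. Qed.

Definition modo (k : 'I_(p * l)) : 'I_l := Ordinal (ltn_pmod k l0).

Lemma kronE (S : 'M[C]_p) (k k' : 'I_(p * l)) :
  kron_id l S k k' = if (k %% l == k' %% l)%N then S (divo k) (divo k') else 0.
Proof. by rewrite /kron_id mxE -getmx_ord. Qed.

Lemma qf_ctr n q (M : 'M[C]_(n, q)) (B : 'M[C]_q) v :
  qf (M *m B *m ctmx M) v = qf B (ctmx M *m v).
Proof. by rewrite /qf ctmxM ctmxK !mulmxA. Qed.

Definition Pr (r : 'I_l) : 'M[C]_(p * l, p) :=
  \matrix_(k, a) (((k %% l == r) && (k %/ l == a))%N)%:R.

Lemma qf_sum n I (r : seq I) (P : pred I) (B : I -> 'M[C]_n) v :
  qf (\sum_(i <- r | P i) B i) v = \sum_(i <- r | P i) qf (B i) v.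
Proof.
rewrite /qf mulmx_sumr mulmx_suml summxE; apply: eq_bigr => i _.
by [].
Qed.

Lemma kron_sum (S : 'M[C]_p) :
  kron_id l S = \sum_r Pr r *m S *m ctmx (Pr r).
Proof.
apply/matrixP => k k'; rewrite kronE summxE.
have inner : forall r (k : 'I_(p * l)) (F : 'I_p -> C),
    \sum_a Pr r k a * F a = if (k %% l == r)%N then F (divo k) else 0.
  move=> r k0 F; rewrite (bigD1 (divo k0)) //= mxE ?divoE eqxx andbT big1 ?addr0.
    by case: eqP; rewrite ?mul1r ?mul0r.
  move=> a ak; rewrite mxE.
  have -> : (k0 %/ l == a)%N = false.
    by apply/negbTE; apply: contra ak => /eqP H; apply/eqP/ord_inj.
  by rewrite andbF mul0r.
have E : forall r, (Pr r *m S *m ctmx (Pr r)) k k' =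
    if (k %% l == r)%N && (k' %% l == r)%N then S (divo k) (divo k') else 0.
  move=> r; rewrite mxE.
  under eq_bigr => b _ do rewrite ctmxE [Pr r k' b]mxE rmorph_nat.
  have -> : \sum_b (Pr r *m S) k b * ((((k' %% l)%N == r) && ((k' %/ l)%N == b))%:R) =
      if (k' %% l == r)%N then (Pr r *m S) k (divo k') else 0.
    rewrite (bigD1 (divo k')) //= ?divoE eqxx andbT big1 ?addr0.
      by case: eqP; rewrite ?mulr1 ?mulr0.
    move=> b bk.
    have -> : (k' %/ l == b)%N = false.
      by apply/negbTE; apply: contra bk => /eqP H; apply/eqP/ord_inj.
    by rewrite andbF mulr0.
  rewrite mxE inner.
  by case: eqP; case: eqP.
under eq_bigr => r _ do rewrite E.
rewrite (bigD1 (modo k)) //= big1 ?addr0.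
  by rewrite eqxx /= [(k' %% l == k %% l)%N]eq_sym.
move=> r rk; have -> : (k %% l == r)%N = false.
  by apply/negbTE; apply: contra rk => /eqP H; apply/eqP/ord_inj.
by [].
Qed.

Lemma kron_posdef (S : 'M[C]_p) : posdef S -> posdef (kron_id l S).
Proof.
move=> [hS pS]; split.
  apply/matrixP => k k'; rewrite ctmxE !kronE eq_sym.
  case: eqP => _; last by rewrite rmorph0.
  by rewrite -ctmxE hS.
move=> v v0; change (0 < qf (kron_id l S) v).
rewrite kron_sum qf_sum.
have nn0 : forall w, 0 <= qf S w.
  move=> w; have [->|w0] := eqVneq w 0; last exact/ltW/pS.
  by rewrite /qf mulmx0 mxE.
have [k vk] : exists k, v k 0 != 0.
  apply/existsP; apply: contraR v0 => /existsPn H; apply/eqP/matrixP => i j.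
  by rewrite (ord1 j) mxE; apply/eqP/negPn/H.
rewrite (bigD1 (modo k)) //=.
apply: ltr_wpDr; first by apply: sumr_ge0 => r _; rewrite qf_ctr.
rewrite qf_ctr; apply: pS.
apply/negP => /eqP/matrixP/(_ (divo k) 0); rewrite !mxE => H.
move: vk; rewrite -H (bigD1 k) //= big1 ?addr0.
  by rewrite ctmxE mxE eqxx ?divoE eqxx rmorph1 mul1r => /eqP.
move=> k' kk; rewrite ctmxE mxE ?divoE.
have -> : (k' %% l == modo k)%N && (k' %/ l == k %/ l)%N = false.
  apply/negbTE; apply: contra kk => /andP[/eqP H1 /eqP H2]; apply/eqP/ord_inj.
  by rewrite (divn_eq k' l) (divn_eq k l) H1 H2.
by rewrite rmorph0 mul0r.
Qed.

End Kron.

Theorem lemma4 (C : numClosedFieldType) (l m : nat) (nn : 'I_m.+1 -> nat)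
  (z : 'I_m.+1 -> C) (Wjk : 'I_m.+1 -> nat -> 'M[C]_l)
  (S : 'M[C]_(Ntot nn)) :
  (0 < l)%N ->
  (forall j, 0 < nn j)%N ->
  z ord0 = 0 ->
  injective z ->
  (forall j, `|z j| < 1) ->
  S = Zmx nn z *m S *m ctmx (Zmx nn z) + evec C nn *m (evec C nn)^T ->
  let W := Wmx nn Wjk in
  let SI := kron_id l S in
  posdef (W *m SI + SI *m ctmx W) ->
  let T := (W - 2^-1%:M) *m invmx (W + 2^-1%:M) in
  forall lambda : C, 0 <= lambda <= 1 ->
    let Wl := invmx (1%:M - lambda *: T) - 2^-1%:M in
    posdef (Wl *m SI + SI *m ctmx Wl).
Proof.
move=> l0 _ _ zinj zlt HS W SI pW T lambda hl Wl.
have pS := S_posdef zinj zlt HS.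
have pSI : posdef SI := kron_posdef l0 pS.
exact: (main_generic pSI pW hl).
Qed.
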